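(* Let $$A= \begin{pmatrix} 1& -2& 2\\ 2&-1& 2\\ 2&-2& 3 \end{pmatrix}.$$ For positive integers $m,n$ define the triple $F(m,n)=(x,y,z)$ by $$x = \frac{3-(-1)^m}{2}mn+m,\qquad y = \frac{x^2-m^2}{2m},\qquad z = \frac{x^2+m^2}{2m}.$$ Then for every positive integer $n$, $$A^{n-1}\begin{pmatrix}3\\4\\5\end{pmatrix} = F(1,n)^\top .$$
   Context: $A^0$ denotes the $3\times 3$ identity matrix; triples are regarded as row vectors and $\top$ denotes transpose. *)

(* Defs.v *)
From mathcomp Require Import all_boot all_order all_algebra.
Set Implicit Arguments. Unset Strict Implicit. Unset Printing Implicit Defensive.
Import Order.TTheory GRing.Theory Num.Theory.
Local Open Scope ring_scope.

Definition Amx : 'M[rat]_3 :=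
  \matrix_(i < 3, j < 3)
    (nth 0 (nth [::] [:: [:: 1; -2; 2]; [:: 2; -1; 2]; [:: 2; -2; 3]] i) j : rat).

Definition v345 : 'cV[rat]_3 := \col_(i < 3) (nth 0 [:: 3; 4; 5] i : rat).

Definition Fx (m n : nat) : rat :=
  (3 - (-1) ^+ m) / 2 * m%:R * n%:R + m%:R.
Definition Fy (m n : nat) : rat := (Fx m n ^+ 2 - m%:R ^+ 2) / (2 * m%:R).
Definition Fz (m n : nat) : rat := (Fx m n ^+ 2 + m%:R ^+ 2) / (2 * m%:R).
Definition F (m n : nat) : 'rV[rat]_3 :=
  \row_(j < 3) nth 0 [:: Fx m n; Fy m n; Fz m n] j.

(* Main.v *)
Require Import Defs.
From mathcomp Require Import all_boot all_order all_algebra.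
From mathcomp Require Import ring.
Import GRing.Theory.
Local Open Scope ring_scope.

Lemma step (k : nat) : Amx *m (F 1 k.+1)^T = (F 1 k.+2)^T.
Proof.
apply/matrixP => i j; rewrite !mxE !big_ord_recr big_ord0 /= !mxE /=.
rewrite ?ord1.
rewrite /Fy /Fz /Fx.
case: i => [[|[|[|i]]] Hi] //=; rewrite ?mxE /=; rewrite ?expr1 -?natr1 ?natrS; by field.
Qed.

Theorem mainTheorem1 (n : nat) : (0 < n)%N ->
  Amx ^+ n.-1 *m v345 = (F 1 n)^T.
Proof.
case: n => // n _ /=.
elim: n => [|k IH].
  rewrite expr0 mul1mx; apply/matrixP => i j; rewrite !mxE ?ord1.
  case: i => [[|[|[|i]]] Hi] //; rewrite /Fy /Fz /Fx /= expr1; field.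
by rewrite exprS -mulmxA IH step.
Qed.
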